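(* Let $S$ be a $\Gamma$-AG$^{**}$-groupoid. Then $S$ is intra-regular if and only if every $\Gamma$-bi-ideal $B$ of $S$ is $\Gamma$-idempotent, i.e. $B\Gamma B=B$.
   Context: Let $S$ and $\Gamma$ be nonempty sets with a map $S\times\Gamma\times S\to S$, $(x,\gamma,y)\mapsto x\gamma y$. $S$ is a $\Gamma$-AG-groupoid if $(x\gamma y)\delta z=(z\gamma y)\delta x$ for all $x,y,z\in S$, $\gamma,\delta\in\Gamma$; it is a $\Gamma$-AG$^{**}$-groupoid if moreover $a\alpha(b\beta c)=b\alpha(a\beta c)$ for all $a,b,c\in S$, $\alpha,\beta\in\Gamma$. For subsets $A,B\subseteq S$, $A\Gamma B=\{a\gamma b: a\in A,\gamma\in\Gamma,b\in B\}$. $S$ is intra-regular if for every $a\in S$ there exist $x,y\in S$ and $\beta,\gamma,\delta\in\Gamma$ with $a=(x\beta(a\delta a))\gamma y$. A nonempty subset $B\subseteq S$ is a $\Gamma$-bi-ideal if $B\Gamma B\subseteq B$ and $(B\Gamma S)\Gamma B\subseteq B$. *)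

(* Defs.v *)
Definition is_GammaAG {S G : Type} (m : S -> G -> S -> S) : Prop :=
  forall (x y z : S) (g d : G), m (m x g y) d z = m (m z g y) d x.

Definition is_GammaAGss {S G : Type} (m : S -> G -> S -> S) : Prop :=
  is_GammaAG m /\
  forall (a b c : S) (al be : G), m a al (m b be c) = m b al (m a be c).

Definition gprod {S G : Type} (m : S -> G -> S -> S) (A B : S -> Prop) : S -> Prop :=
  fun s => exists a g b, A a /\ B b /\ s = m a g b.

Definition subset {S : Type} (A B : S -> Prop) : Prop := forall s, A s -> B s.

Definition intra_regular {S G : Type} (m : S -> G -> S -> S) : Prop :=
  forall a : S, exists (x y : S) (be ga de : G), a = m (m x be (m a de a)) ga y.

Definition is_bi_ideal {S G : Type} (m : S -> G -> S -> S) (B : S -> Prop) : Prop :=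
  (exists b, B b) /\
  subset (gprod m B B) B /\
  subset (gprod m (gprod m B (fun _ => True)) B) B.

Definition gamma_idempotent {S G : Type} (m : S -> G -> S -> S) (B : S -> Prop) : Prop :=
  forall s, gprod m B B s <-> B s.

(* Main.v *)
Require Import Defs.

Inductive LC {S G : Type} (m : S -> G -> S -> S) (a : S) : S -> Prop :=
| lc0 : forall d, LC m a (m a d a)
| lcS : forall x g w, LC m a w -> LC m a (m x g w).

Definition FF {S G : Type} (m : S -> G -> S -> S) (a : S) (z : S) : Prop :=
  LC m a z \/ exists w g y, LC m a w /\ z = m w g y.

Definition DD {S G : Type} (m : S -> G -> S -> S) (a : S) (z : S) : Prop :=
  z = a \/ (exists x g u d, z = m (m x g u) d a) \/ FF m a z.

Section Aux.
Context {S G : Type} (m : S -> G -> S -> S)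
  (L1 : forall (x y z : S) (g d : G), m (m x g y) d z = m (m z g y) d x)
  (L2 : forall (a b c : S) (al be : G), m a al (m b be c) = m b al (m a be c)).

Lemma medial : forall x y z w al be ga,
  m (m x al y) be (m z ga w) = m (m x al z) be (m y ga w).
Proof.
  intros.
  pose proof (L1 x y (m z ga w) al be).
  pose proof (L1 z w y ga al).
  pose proof (L1 (m y ga w) z x al be).
  congruence.
Qed.

Lemma F_left : forall a z x g, FF m a z -> FF m a (m x g z).
Proof.
  intros a z x g [Hz | (w & g' & y & Hw & ->)].
  - left. apply lcS. exact Hz.
  - right. exists w, g, (m x g' y). split; [exact Hw|]. apply L2.
Qed.

Lemma F_right : forall a z x g, FF m a z -> FF m a (m z g x).
Proof.
  intros a z x g [Hz | (w & g' & y & Hw & ->)].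
  - right. exists z, g, x. split; [exact Hz|reflexivity].
  - left. rewrite L1. apply lcS. exact Hw.
Qed.

Lemma LC_form : forall a w, LC m a w -> exists e V, w = m a e V.
Proof.
  intros a w H. induction H as [d | x g w Hw (e & V & ->)].
  - exists d, a. reflexivity.
  - exists g, (m x e V). apply L2.
Qed.

Lemma DD_prod_F : forall a p q g, DD m a p -> DD m a q -> FF m a (m p g q).
Proof.
  intros a p q g Hp Hq.
  destruct Hp as [-> | [(x & g1 & u & d1 & ->) | Fp]];
  [| | apply F_right; exact Fp];
  (destruct Hq as [-> | [(y & g2 & t & d2 & ->) | Fq]];
   [| | apply F_left; exact Fq]).
  - left. apply lc0.
  - left. rewrite L2. apply lcS. apply lc0.
  - right. exists (m a d1 a), g, (m x g1 u). split; [apply lc0|]. apply L1.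
  - left. rewrite medial. apply lcS. apply lc0.
Qed.

Lemma DD_bi : forall a, is_bi_ideal m (DD m a).
Proof.
  intro a. split; [exists a; left; reflexivity|]. split.
  - intros s (p & g & q & Hp & Hq & ->). right. right. apply DD_prod_F; assumption.
  - intros s (p' & d & q & (p & g & t & Hp & _ & ->) & Hq & ->).
    destruct Hq as [-> | [(y & g2 & t2 & d2 & ->) | Fq]].
    + right. left. exists p, g, t, d. reflexivity.
    + right. left. exists (m (m p g t) d2 y), g2, t2, d.
      pose proof (L1 y t2 a g2 d2).
      pose proof (L2 (m p g t) (m a g2 t2) y d d2).
      pose proof (L1 a t2 (m (m p g t) d2 y) g2 d).
      congruence.
    + right. right. apply F_left. exact Fq.
Qed.

Lemma claim : forall a w, LC m a w -> forall g y, a = m w g y ->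
  exists (x y : S) (be ga de : G), a = m (m x be (m a de a)) ga y.
Proof.
  intros a w Hw. induction Hw as [d | s ga K HK IH]; intros g y H.
  - exists (m a g y), y, d, g, d.
    pose proof (L1 (m a d a) y a g d). congruence.
  - destruct (LC_form a K HK) as (e & V & HKe).
    set (W := m s e V).
    pose proof (L2 s a V ga e) as e1.
    pose proof (L1 a W y ga g) as e2.
    pose proof (L2 (m y ga W) (m s ga K) y g g) as e3.
    pose proof (L1 s K (m (m y ga W) g y) ga g) as e4.
    pose proof (L1 (m y ga W) y K g ga) as e5.
    pose proof (L1 (m K g y) (m y ga W) s ga g) as e6.
    pose proof (L2 (m s ga (m y ga W)) K y g g) as e7.
    apply (IH g (m (m s ga (m y ga W)) g y)).
    subst W. congruence.
Qed.

End Aux.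

Theorem mainTheorem10 (S G : Type) (m : S -> G -> S -> S)
  (hS : inhabited S) (hG : inhabited G) (hAG : is_GammaAGss m) :
  intra_regular m <-> (forall B : S -> Prop, is_bi_ideal m B -> gamma_idempotent m B).
Proof.
  destruct hAG as [L1 L2]. unfold is_GammaAG in L1.
  split.
  - intros IR B (_ & HBB & HBSB) b. split; [apply HBB|]. intro Bb.
    destruct (IR b) as (x & y & be & ga & de & H).
    set (Z := m (m y be x) be x).
    exists b, ga, (m (m b de (m Z ga y)) de b).
    split; [exact Bb|]. split.
    + apply HBSB. exists (m b de (m Z ga y)), de, b.
      split; [|split; [exact Bb|reflexivity]].
      exists b, de, (m Z ga y). repeat split; auto.
    + set (X := m x be (m b de b)).
      set (Wt := m x de (m b ga y)).
      set (V := m (m b de b) de (m b ga y)).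
      pose proof (L2 b X y de ga).
      pose proof (L2 x X (m b ga y) be de).
      pose proof (L1 x (m b de b) Wt be be).
      pose proof (L1 (m Wt be (m b de b)) x y be ga).
      pose proof (L1 x (m b ga y) (m b de b) de be).
      pose proof (L2 (m y be x) V x ga be).
      pose proof (L1 (m b de b) (m b ga y) Z de ga).
      pose proof (L2 (m Z de (m b ga y)) b b ga de).
      pose proof (L2 Z b y de ga).
      subst X Wt V Z. congruence.
  - intros HB a.
    destruct (proj2 (HB (DD m a) (DD_bi m L1 L2 a) a) (or_introl eq_refl))
      as (p & g & q & Hp & Hq & Ha).
    pose proof (DD_prod_F m L1 L2 a p q g Hp Hq) as HF.
    rewrite <- Ha in HF.
    destruct HF as [Ha' | (w & g' & y & Hw & Hy)].
    + destruct (LC_form m L2 a a Ha') as (e & V & HaV).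
      exact (claim m L1 L2 a a Ha' e V HaV).
    + exact (claim m L1 L2 a w Hw g' y Hy).
Qed.
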